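(* Let $l\ge2$, $d\ge2$ and $X=X_{l,d}$. Under the action of the torus $T$ on $\mathbb{T}^1=\mathrm{Ext}^1(\Omega^1_X,\mathcal{O}_X)$, with character group identified with $M_0=\{u\in M:\deg(u)=0\}$, one has the weight decomposition $\mathbb{T}^1=\bigoplus_{u\in\Phi}\mathbb{T}^1_u$ with $\dim\mathbb{T}^1_u=1$ for every $u\in\Phi$, where $\Psi=\{u\in M_0:u+\epsilon\in\sigma^\vee\}$ and $\Phi=\Psi\setminus\{e_{ij}-e_{i'j'}:1\le i,i'\le l,\ 1\le j,j'\le d\}$.
   Context: $X_{l,d}=\{x_{11}\cdots x_{1d}+\dots+x_{l1}\cdots x_{ld}=0\}\subset\mathbb{P}^{ld-1}$. $\mathbf{Z}^{ld}$ has basis $e_{ij}$, $\epsilon_i=\sum_je_{ij}$, $M=\mathbf{Z}^{ld}/\langle\epsilon_1-\epsilon_2,\dots,\epsilon_1-\epsilon_l\rangle$ with images $e_{ij}$ and $\epsilon=\epsilon_1=\dots=\epsilon_l$; $\deg\colon M\to\mathbf{Z}$, $e_{ij}\mapsto1$; $\sigma^\vee$ is the cone in $M_\mathbf{R}$ generated by the $e_{ij}$. $\widetilde T=\{\mathrm{diag}(\lambda_{ij}):\prod_j\lambda_{1j}=\dots=\prod_j\lambda_{lj}\}\cong\mathrm{Spec}\,\mathbf{C}[M]$ (character $e_{ij}\leftrightarrow\lambda_{ij}$), $T=\widetilde T/\mathbf{C}^*$ with character group $M_0$. $T$ acts on $\mathbb{T}^1$, identified with $\mathbf{C}[x_{ij}]_d/\mathrm{span}\langle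 x_{i'j'}\prod_{k\ne j}x_{ik}\rangle$, by $\lambda\cdot g(x)=g(\lambda\cdot x)/(\lambda_{11}\cdots\lambda_{1d})$. *)

(* Defs.v *)
From HB Require Import structures.
From mathcomp Require Import all_boot all_order all_algebra.
From mathcomp Require Import reals.
From mathcomp Require Import complex.
Set Implicit Arguments. Unset Strict Implicit. Unset Printing Implicit Defensive.
Import Order.TTheory GRing.Theory Num.Theory.
Local Open Scope ring_scope.

Section XLD.
Variables (l d : nat).

Definition XIdx := ('I_l * 'I_d)%type.

(* elements of Z^{ld} (representatives of elements of M) *)
Definition XZLD := {ffun XIdx -> int}.

Definition Xe (p : XIdx) : XZLD := [ffun q => (q == p)%:Z].
Definition Xeps (i : 'I_l) : XZLD := [ffun q : XIdx => (q.1 == i)%:Z].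

(* u = v in M = Z^{ld} / <eps_1 - eps_2, ..., eps_1 - eps_l>: the difference
   lies in the sublattice generated by the eps_i - eps_k
   (the same sublattice as the one generated by eps_1 - eps_i). *)
Definition XMeq (u v : XZLD) : Prop :=
  exists a : 'I_l -> 'I_l -> int,
    u - v = \sum_(i < l) \sum_(k < l) (Xeps i - Xeps k) *~ a i k.

Definition XdegM (u : XZLD) : int := \sum_(p : XIdx) u p.
Definition XinM0 (u : XZLD) : Prop := XdegM u = 0.

(* x in M_R lies in the cone sigma^vee generated by the e_ij:
   x = sum c_ij e_ij (c_ij >= 0) modulo the real span of the eps_i - eps_k *)
Definition Xin_sigma_dual (R : realType) (x : XZLD) : Prop :=
  exists (c : XIdx -> R) (a : 'I_l -> 'I_l -> R),
    (forall p, 0 <= c p) /\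
    forall p : XIdx, (x p)%:~R = c p +
      \sum_(i < l) \sum_(k < l) a i k * ((p.1 == i)%:R - (p.1 == k)%:R).

(* XPsi = { u in M_0 : u + eps in sigma^vee }, with eps = eps_1 = image of Xeps{i1} *)
Definition XPsi (R : realType) (i1 : 'I_l) (u : XZLD) : Prop :=
  XinM0 u /\ Xin_sigma_dual R (u + Xeps i1).

Definition XPhi (R : realType) (i1 : 'I_l) (u : XZLD) : Prop :=
  XPsi R i1 u /\ ~ (exists p q : XIdx, XMeq u (Xe p - Xe q)).

Definition Xexpo_ok (a : {ffun XIdx -> 'I_d.+1}) : bool :=
  (\sum_(p : XIdx) (a p : nat) == d)%N.
Definition XMon := {a : {ffun XIdx -> 'I_d.+1} | Xexpo_ok a}.
Definition Xexpo (a : XMon) (p : XIdx) : nat := val a p.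

(* C[x_ij]_d, homogeneous polynomials of degree d, as coefficient vectors *)
Definition XPoly (C : fieldType) := {ffun XMon -> C^o}.

(* exponent of the monomial x_{i'j'} prod_{k <> j} x_{ik} *)
Definition Xrel_expo (i : 'I_l) (j : 'I_d) (i' : 'I_l) (j' : 'I_d) (p : XIdx) : nat :=
  ((p.1 == i) && (p.2 != j)) + (p == (i', j')).

Definition Xis_rel_mon (a : XMon) : bool :=
  [exists i : 'I_l, exists j : 'I_d, exists i' : 'I_l, exists j' : 'I_d,
     [forall p : XIdx, Xexpo a p == Xrel_expo i j i' j' p]].

Definition Xmonv (C : fieldType) (a : XMon) : XPoly C := [ffun b => (b == a)%:R].

Definition XWsp (C : fieldType) : {vspace XPoly C} :=
  <<[seq Xmonv C a | a <- enum [pred a : XMon | Xis_rel_mon a]]>>%VS.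

Definition Xin_Ttilde (C : fieldType) (lam : XIdx -> C) : Prop :=
  (forall p, lam p != 0) /\
  forall i k : 'I_l, \prod_(j < d) lam (i, j) = \prod_(j < d) lam (k, j).

(* action lambda . g(x) = g(lambda . x) / (lambda_11 ... lambda_1d) on
   coefficient vectors: the coefficient of x^a gets multiplied by lambda^a *)
Definition Xact (C : fieldType) (i1 : 'I_l) (lam : XIdx -> C) (f : XPoly C) : XPoly C :=
  [ffun a : XMon => f a * (\prod_(p : XIdx) lam p ^+ Xexpo a p)
                       / \prod_(j < d) lam (i1, j)].

Definition Xchr (C : fieldType) (u : XZLD) (lam : XIdx -> C) : C :=
  \prod_(p : XIdx) lam p ^ u p.

(* f in C[x]_d represents an element of the weight space T^1_u of
   T^1 = C[x]_d / W, i.e. lambda.[f] = chi^u(lambda) [f] in T^1 for all lambda *)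
Definition Xin_weight (C : fieldType) (i1 : 'I_l) (u : XZLD) (f : XPoly C) : Prop :=
  forall lam, Xin_Ttilde lam -> (Xact i1 lam f - Xchr u lam *: f \in XWsp C)%VS.

End XLD.

Definition Xrow1 (l : nat) (hl : (1 < l)%N) : 'I_l := Ordinal (ltnW hl).

(* Main.v *)
Require Import Defs.
From HB Require Import structures.
From mathcomp Require Import all_boot all_order all_algebra.
From mathcomp Require Import reals complex.
From mathcomp Require Import ring.
Import Order.TTheory GRing.Theory Num.Theory.
Local Open Scope ring_scope.
Set Implicit Arguments. Unset Strict Implicit. Unset Printing Implicit Defensive.

Section Aux.
Variables (l d : nat).
Local Notation I := (XIdx l d).
Local Notation Z := (XZLD l d).

Definition rowc (v : Z) : bool :=
  [forall p : I, forall q : I, (p.1 == q.1) ==> (v p == v q)].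
Definition inL (v : Z) : bool := rowc v && (XdegM v == 0).

Lemma sum_pair (F : I -> int) : \sum_p F p = \sum_(i < l) \sum_(j < d) F (i, j).
Proof. by rewrite pair_bigA; apply: eq_bigr => -[]. Qed.

Lemma degD (u v : Z) : XdegM (u + v) = XdegM u + XdegM v.
Proof. by rewrite /XdegM -big_split; apply: eq_bigr => p _; rewrite ffunE. Qed.
Lemma degN (u : Z) : XdegM (- u) = - XdegM u.
Proof. by rewrite /XdegM -sumrN; apply: eq_bigr => p _; rewrite ffunE. Qed.
Lemma degB (u v : Z) : XdegM (u - v) = XdegM u - XdegM v.
Proof. by rewrite degD degN. Qed.
Lemma degMz (u : Z) n : XdegM (u *~ n) = XdegM u *~ n.
Proof. by rewrite /XdegM mulrz_suml; apply: eq_bigr => p _; rewrite ffunMzE. Qed.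
Lemma deg_sum (T : Type) (r : seq T) (F : T -> Z) :
  XdegM (\sum_(x <- r) F x) = \sum_(x <- r) XdegM (F x).
Proof.
elim: r => [|x r IH]; last by rewrite !big_cons degD IH.
by rewrite !big_nil /XdegM big1 // => p _; rewrite ffunE.
Qed.

Lemma sum_delta (i : 'I_l) (x : 'I_l -> int) : \sum_(r < l) (r == i)%:Z * x r = x i.
Proof.
by rewrite (bigD1 i) //= eqxx mul1r big1 ?addr0 // => r /negbTE ->; rewrite mul0r.
Qed.

Lemma deg_eps (i : 'I_l) : XdegM (Xeps d i) = d%:Z.
Proof.
rewrite /XdegM sum_pair.
transitivity (\sum_(r < l) (r == i)%:Z * d%:Z).
  apply: eq_bigr => r _; rewrite (eq_bigr (fun=> (r == i)%:Z)); last by move=> j _; rewrite ffunE.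
  by rewrite sumr_const card_ord -mulr_natr natz.
by rewrite sum_delta.
Qed.

Lemma deg_e (p : I) : XdegM (Xe p) = 1.
Proof.
rewrite /XdegM (bigD1 p) //= big1 ?addr0; first by rewrite ffunE eqxx.
by move=> q /negbTE; rewrite ffunE => ->.
Qed.


Lemma rowcP (v : Z) : reflect (forall p q : I, p.1 = q.1 -> v p = v q) (rowc v).
Proof.
apply: (iffP forallP) => [H p q e|H p]; first by move: (forallP (H p) q); rewrite e eqxx => /eqP.
by apply/forallP => q; apply/implyP => /eqP e; rewrite (H p q e).
Qed.

Lemma deg_rowc (v : Z) (j0 : 'I_d) : rowc v -> XdegM v = (\sum_(i < l) v (i, j0)) *+ d.
Proof.
move/rowcP => H; rewrite /XdegM sum_pair -sumrMnl; apply: eq_bigr => i _.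
by rewrite (eq_bigr (fun=> v (i, j0))) ?sumr_const ?card_ord // => j _; apply: H.
Qed.

Lemma XMeq_inL (u v : Z) : XMeq u v -> inL (u - v).
Proof.
case=> a ->; apply/andP; split.
  apply/rowcP => p q e; rewrite !sum_ffunE; apply: eq_bigr => i _.
  rewrite !sum_ffunE; apply: eq_bigr => k _; rewrite !ffunMzE !ffunE /=.
  by rewrite e.
rewrite deg_sum big1 // => i _; rewrite deg_sum big1 // => k _.
by rewrite degMz degB !deg_eps subrr mul0rz.
Qed.

Lemma inL_XMeq (i1 : 'I_l) (j0 : 'I_d) (u v : Z) : inL (u - v) -> XMeq u v.
Proof.
case/andP=> rc /eqP dg; set w := u - v in rc dg *.
have st : \sum_(i < l) w (i, j0) = 0.
  have dpos : (0 < d)%N := leq_ltn_trans (leq0n _) (ltn_ord j0).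
  move: dg; rewrite (deg_rowc j0 rc) => /eqP; rewrite mulrn_eq0 => /orP[/eqP d0|/eqP //].
  by exfalso; move: dpos; rewrite d0.
exists (fun i k => if k == i1 then w (i, j0) else 0).
apply/ffunP => p; rewrite sum_ffunE.
transitivity (\sum_(i < l) ((p.1 == i)%:Z - (p.1 == i1)%:Z) * w (i, j0)).
  rewrite (eq_bigr (fun i => (i == p.1)%:Z * w (i, j0) - (p.1 == i1)%:Z * w (i, j0))); last first.
    by move=> i _; rewrite mulrBl eq_sym.
  rewrite sumrB sum_delta -mulr_sumr st mulr0 subr0.
  by move/rowcP: rc => /(_ p (p.1, j0)) ->.
apply: eq_bigr => i _; rewrite sum_ffunE (bigD1 i1) //= eqxx big1 ?addr0.
  by rewrite ffunMzE !ffunE -mulrzr intz.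
by move=> k /negbTE ->; rewrite ffunMzE mulr0z.
Qed.

End Aux.

Section Mon.
Variables (l d : nat).
Local Notation I := (XIdx l d).
Local Notation Z := (XZLD l d).
Local Notation XMon := (XMon l d).

Definition mv (a : XMon) : Z := [ffun p => (Xexpo a p)%:Z].
Definition wt (i1 : 'I_l) (a : XMon) : Z := mv a - Xeps d i1.

Lemma sumPosz (F : I -> nat) : \sum_p (F p)%:Z = (\sum_p F p)%N%:Z.
Proof. by rewrite (big_morph Posz PoszD (erefl 0%:Z)). Qed.

Lemma Xexpo_sum (a : XMon) : (\sum_p Xexpo a p)%N = d.
Proof. by case: a => f H; apply/eqP. Qed.

Lemma deg_mv (a : XMon) : XdegM (mv a) = d%:Z.
Proof.
rewrite /XdegM (eq_bigr (fun p => (Xexpo a p)%:Z)); last by move=> p _; rewrite ffunE.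
by rewrite sumPosz Xexpo_sum.
Qed.

Lemma Xmon_inj (a b : XMon) : (forall p, Xexpo a p = Xexpo b p) -> a = b.
Proof. by move=> H; apply/val_inj/ffunP => p; apply/val_inj; apply: H. Qed.

Lemma mv_inj (a b : XMon) : mv a = mv b -> a = b.
Proof.
move=> e; apply: Xmon_inj => p; move/ffunP: e => /(_ p); rewrite !ffunE.
by case.
Qed.

Lemma inL0 : inL (0 : Z).
Proof.
apply/andP; split; first by apply/rowcP => p q _; rewrite !ffunE.
by rewrite /XdegM big1 // => p _; rewrite ffunE.
Qed.

Lemma inLD (u v : Z) : inL u -> inL v -> inL (u + v).
Proof.
case/andP=> /rowcP ru /eqP du /andP[/rowcP rv /eqP dv]; apply/andP; split.
  by apply/rowcP => p q e; rewrite !ffunE (ru p q e) (rv p q e).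
by rewrite degD du dv addr0.
Qed.

Lemma inLN (u : Z) : inL u -> inL (- u).
Proof.
case/andP=> /rowcP ru /eqP du; apply/andP; split.
  by apply/rowcP => p q e; rewrite !ffunE (ru p q e).
by rewrite degN du oppr0.
Qed.

Lemma inL_sym (u v : Z) : inL (u - v) -> inL (v - u).
Proof. by move/inLN; rewrite opprB. Qed.

Lemma inL_trans (u v w : Z) : inL (u - v) -> inL (v - w) -> inL (u - w).
Proof. by move=> h1 h2; have := inLD h1 h2; rewrite addrA subrK. Qed.

Lemma inL_eps (i k : 'I_l) : inL (Xeps d i - Xeps d k).
Proof.
apply/andP; split; last by rewrite degB !deg_eps subrr.
by apply/rowcP => p q e; rewrite !ffunE e.
Qed.

Lemma eps_rel (j0 : 'I_d) (a : XMon) (r : 'I_l) :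
  (forall p, Xexpo a p = (p.1 == r)) -> Xis_rel_mon a.
Proof.
move=> H; apply/existsP; exists r; apply/existsP; exists j0.
apply/existsP; exists r; apply/existsP; exists j0; apply/forallP => -[i j].
rewrite H /Xrel_expo /= xpair_eqE.
by case: (i == r); case: (j == j0).
Qed.

Lemma rel_vec (i : 'I_l) (j : 'I_d) (i' : 'I_l) (j' : 'I_d) :
  [ffun p => (Xrel_expo i j i' j' p)%:Z] = Xeps d i - Xe (i, j) + Xe (i', j') :> Z.
Proof.
apply/ffunP => -[a b]; rewrite !ffunE /Xrel_expo /= PoszD; congr (_ + _).
rewrite xpair_eqE; case: (a == i); case: (b == j) => //=.
Qed.

Lemma key (j0 : 'I_d) (a : XMon) (b : Z) : (forall p, 0 <= b p) ->
  inL (mv a - b) ->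
  (forall p, (Xexpo a p)%:Z = b p) \/ exists r, forall p, Xexpo a p = (p.1 == r).
Proof.
move=> b0 /andP[rc /eqP dg]; set s := mv a - b in rc dg.
have dpos : (0 < d)%N := leq_ltn_trans (leq0n _) (ltn_ord j0).
have sp p : s p = s (p.1, j0) by move/rowcP: rc; apply.
case: (boolP [exists r, 0 < s (r, j0)]) => [/existsP[r sr]|/existsPn hr].
  right; exists r.
  have ge p : (p.1 == r <= Xexpo a p)%N.
    case: eqP => [e|//]; rewrite lt0n -lt0n -(ltz_nat 0).
    have : s p = (Xexpo a p)%:Z - b p by rewrite !ffunE.
    rewrite sp e => H; apply: (lt_le_trans sr); rewrite H lerBlDr lerDl; exact: b0.
  have hsum : (\sum_p (Xexpo a p - (p.1 == r)))%N = 0%N.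
    have := Xexpo_sum a; rewrite (eq_bigr (fun p => (p.1 == r) + (Xexpo a p - (p.1 == r))))%N.
      rewrite big_split /=.
      have -> : (\sum_(p : I) (p.1 == r))%N = d.
        apply/eqP; rewrite -eqz_nat -sumPosz -(deg_eps d r) /XdegM.
        by apply/eqP/eq_bigr => p _; rewrite ffunE.
      by move=> H; apply/eqP; rewrite -(eqn_add2l d) addn0 H.
    by move=> p _; rewrite subnKC.
  move=> p; apply/eqP; rewrite eqn_leq ge andbT -subn_eq0.
  by move/eqP: hsum; rewrite sum_nat_eq0 => /forallP /(_ p).
left.
have s0 : forall r, s (r, j0) = 0.
  have : \sum_r (- s (r, j0)) = 0.
    move: dg; rewrite (deg_rowc j0 rc) => /eqP; rewrite mulrn_eq0 => /orP[/eqP d0|/eqP H].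
      by exfalso; move: dpos; rewrite d0.
    by rewrite sumrN H oppr0.
  move/psumr_eq0P => H r; apply/eqP; rewrite -oppr_eq0; apply/eqP; apply: H => // i _.
  by rewrite oppr_ge0 leNgt; apply: hr.
move=> p; have := s0 p.1; rewrite -sp !ffunE => /eqP; rewrite subr_eq0 => /eqP //.
Qed.

Lemma key_rel (j0 : 'I_d) (a : XMon) (b : Z) : (forall p, 0 <= b p) ->
  inL (mv a - b) -> ~~ Xis_rel_mon a -> forall p, (Xexpo a p)%:Z = b p.
Proof.
move=> b0 h nr; case: (key j0 b0 h) => // -[r H].
by move: nr; rewrite (eps_rel j0 H).
Qed.

Lemma mkMon (b : Z) : (forall p, 0 <= b p) -> XdegM b = d%:Z ->
  exists a : XMon, mv a = b.
Proof.
move=> b0 db.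
have le p : (`|b p| < d.+1)%N.
  rewrite ltnS -(lez_nat) gez0_abs // -db /XdegM (bigD1 p) //= lerDl.
  by apply: sumr_ge0 => q _.
pose f : {ffun I -> 'I_d.+1} := [ffun p => inord `|b p|].
have fok : Xexpo_ok f.
  apply/eqP; apply/eqP; rewrite -eqz_nat -sumPosz -db /XdegM.
  apply/eqP/eq_bigr => p _; rewrite ffunE inordK // gez0_abs //.
exists (exist _ f fok); apply/ffunP => p; rewrite !ffunE /Xexpo /= ffunE inordK //.
by rewrite gez0_abs.
Qed.

End Mon.

Section Phi.
Variables (R : realType) (l d : nat) (i1 : 'I_l) (j0 : 'I_d).
Local Notation I := (XIdx l d).
Local Notation Z := (XZLD l d).
Local Notation XMon := (XMon l d).

Lemma rel_inL (a : XMon) (i : 'I_l) (j : 'I_d) (i' : 'I_l) (j' : 'I_d) :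
  (forall p, Xexpo a p = Xrel_expo i j i' j' p) ->
  inL (wt i1 a - (Xe (i', j') - Xe (i, j))).
Proof.
move=> H.
have -> : wt i1 a - (Xe (i', j') - Xe (i, j)) = Xeps d i - Xeps d i1.
  apply/ffunP => p; move/ffunP: (rel_vec i j i' j') => /(_ p).
  rewrite /wt !ffunE -H => ->; ring.
exact: inL_eps.
Qed.

Lemma not_rel_e (a : XMon) : ~~ Xis_rel_mon a ->
  ~ (exists p q : I, XMeq (wt i1 a) (Xe p - Xe q)).
Proof.
move=> nr [[i' j'] [[i j] /XMeq_inL H]].
have h2 : inL (mv a - [ffun p => (Xrel_expo i j i' j' p)%:Z]).
  have -> : mv a - [ffun p => (Xrel_expo i j i' j' p)%:Z] =
     (wt i1 a - (Xe (i', j') - Xe (i, j))) + (Xeps d i1 - Xeps d i).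
    by rewrite rel_vec; apply/ffunP => p; rewrite /wt !ffunE; ring.
  by apply: inLD => //; apply: inL_eps.
have b0 p : 0 <= [ffun p => (Xrel_expo i j i' j' p)%:Z] p by rewrite ffunE.
have E := key_rel j0 b0 h2 nr; move/negP: nr; apply.
apply/existsP; exists i; apply/existsP; exists j; apply/existsP; exists i'.
apply/existsP; exists j'; apply/forallP => p.
by have := E p; rewrite ffunE => -[->].
Qed.


Lemma wt_Phi (a : XMon) : ~~ Xis_rel_mon a -> XPhi R i1 (wt i1 a).
Proof.
move=> nr; split; last exact: not_rel_e.
split; first by rewrite /XinM0 /wt degB deg_mv deg_eps subrr.
exists (fun p => (Xexpo a p)%:R), (fun _ _ => 0); split=> [p|p]; first exact: ler0n.
rewrite /wt subrK ffunE big1 ?addr0 // => i _; rewrite big1 // => k _; exact: mul0r.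
Qed.

Lemma sum_delta_R (i : 'I_l) : \sum_(r < l) (r == i)%:R = 1 :> R.
Proof.
by rewrite (bigD1 i) //= eqxx big1 ?addr0 // => r /negbTE ->.
Qed.

Lemma Phi_good (u : Z) : XPhi R i1 u ->
  exists a : XMon, ~~ Xis_rel_mon a /\ inL (wt i1 a - u).
Proof.
case=> -[du [c [al [c0 Hx]]]] nE.
set x := u + Xeps d i1 in Hx.
pose tau (r : 'I_l) : R := \sum_(i < l) \sum_(k < l) al i k * ((r == i)%:R - (r == k)%:R).
have stau : \sum_r tau r = 0.
  rewrite /tau exchange_big big1 // => i _; rewrite exchange_big big1 // => k _.
  by rewrite -mulr_sumr sumrB !sum_delta_R subrr mulr0.
pose J (r : 'I_l) := [arg min_(j < j0) x (r, j)]%O.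
have hJ r j : x (r, J r) <= x (r, j).
  by rewrite /J; case: (@arg_minP _ _ _ j0 predT (fun j => x (r, j)) isT) => jm _ H; apply: H.
pose m r := x (r, J r).
have taum r : tau r <= (m r)%:~R.
  by rewrite /m Hx /= lerDr; apply: c0.
pose S := \sum_r m r.
have S0 : 0 <= S.
  rewrite -(ler0z R) /S (big_morph (fun n : int => n%:~R : R) (intrD R) (erefl _)).
  by rewrite -stau; apply: ler_sum => r _.
pose t r := m r - (r == i1)%:Z * S.
pose rv : Z := [ffun p : I => t p.1].
have rvc : rowc rv by apply/rowcP => p q e; rewrite !ffunE e.
have st : \sum_r t r = 0.
  rewrite /t sumrB.
  have -> : \sum_(r < l) (r == i1)%:Z * S = S by apply: (sum_delta i1 (fun=> S)).
  by rewrite subrr.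
have rvd : XdegM rv = 0.
  by rewrite (deg_rowc j0 rvc) (eq_bigr t) ?st ?mul0rn // => r _; rewrite ffunE.
have b0 p : 0 <= (x - rv) p.
  rewrite !ffunE /t subr_ge0 lerBlDr; apply: (le_trans (hJ p.1 p.2)).
  have -> : x (p.1, p.2) = x p by case: p.
  by rewrite [x p]ffunE [Xeps d i1 p]ffunE lerDl mulr_ge0.
have bd : XdegM (x - rv) = d%:Z by rewrite degB rvd subr0 degD du deg_eps add0r.
case: (mkMon b0 bd) => a0 ha0.
have hL : inL (wt i1 a0 - u).
  have -> : wt i1 a0 - u = - rv.
    by rewrite /wt ha0 /x; apply/ffunP => p; rewrite !ffunE; ring.
  by apply: inLN; apply/andP; split => //; apply/eqP.
exists a0; split => //.
apply/negP => /existsP[i /existsP[j /existsP[i' /existsP[j' /forallP H]]]].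
apply: nE; exists (i', j'), (i, j); apply: (inL_XMeq i1 j0).
have := inL_trans (inL_sym hL) (rel_inL (fun p => (eqP (H p)))).
done.
Qed.

End Phi.

Section Vec.
Variables (l d : nat) (C : fieldType).
Local Notation XMon := (XMon l d).
Local Notation V := (XPoly l d C).

Definition MS (A : pred XMon) : {vspace V} := <<[seq Xmonv C a | a <- enum A]>>%VS.

Lemma XmonvE (a b : XMon) : Xmonv C a b = (b == a)%:R.
Proof. by rewrite ffunE. Qed.

Lemma scaleE (k : C) (g : V) b : (k *: g) b = k * g b.
Proof. by rewrite ffunE. Qed.

Lemma decomp (f : V) : f = \sum_a f a *: Xmonv C a.
Proof.
apply/ffunP => b; rewrite sum_ffunE (bigD1 b) //= big1 => [|a ne].
  by rewrite addr0 scaleE XmonvE eqxx mulr1.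
by rewrite scaleE XmonvE eq_sym (negbTE ne) mulr0.
Qed.

Lemma MSP (A : pred XMon) (f : V) : f \in MS A <-> forall b, ~~ A b -> f b = 0.
Proof.
split.
  move=> /(@coord_span _ _ _ (in_tuple _)) -> b nb; rewrite sum_ffunE big1 // => i _.
  rewrite scaleE.
  have : (in_tuple [seq Xmonv C a | a <- enum A])`_i \in [seq Xmonv C a | a <- enum A].
    exact: mem_nth (ltn_ord i).
  case/mapP => a; rewrite mem_enum => Aa ->; rewrite XmonvE.
  by case: eqP => [e|]; [move: nb; rewrite e -[A a]/(a \in A) Aa | rewrite mulr0].
move=> H; rewrite (decomp f) (bigID A) /= [X in _ + X]big1 ?addr0.
  apply: memv_suml => a Aa; apply: memvZ; apply: memv_span.
  by apply: map_f; rewrite mem_enum.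
by move=> a /H ->; rewrite scale0r.
Qed.

Lemma dimMS (a0 : XMon) (A : pred XMon) : \dim (MS A) = #|A|.
Proof.
rewrite cardE -(size_map (Xmonv C)); apply/eqP.
apply/(@freeP _ _ _ (in_tuple _)) => k Hk i.
have sz (j : 'I_(size [seq Xmonv C a | a <- enum A])) : (j < size (enum A))%N :=
  leq_trans (ltn_ord j) (eq_leq (size_map _ _)).
move/ffunP: Hk => /(_ (nth a0 (enum A) i)); rewrite sum_ffunE ffunE.
rewrite (bigD1 i) //= big1 ?addr0.
  by rewrite scaleE (nth_map a0) ?sz // XmonvE eqxx mulr1.
move=> j nji; rewrite scaleE (nth_map a0) ?sz //.
rewrite XmonvE nth_uniq ?enum_uniq ?sz //.
by case: eqP => [/val_inj e|]; [move: nji; rewrite e eqxx | rewrite mulr0].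
Qed.

Lemma MS_full : MS predT = fullv.
Proof.
apply/vspaceP => f; rewrite memvf; apply/MSP => b //.
Qed.

End Vec.

Section Chr.
Variables (l d : nat) (C : numFieldType).
Local Notation I := (XIdx l d).
Local Notation Z := (XZLD l d).

Lemma prod_pair (F : I -> C) : \prod_p F p = \prod_(i < l) \prod_(j < d) F (i, j).
Proof. by rewrite pair_bigA; apply: eq_bigr => -[]. Qed.

Section Lam.
Variable lam : I -> C.
Hypothesis nz : forall p, lam p != 0.

Lemma chrD (u v : Z) : Xchr (u + v) lam = Xchr u lam * Xchr v lam.
Proof. by rewrite /Xchr -big_split; apply: eq_bigr => p _; rewrite ffunE expfzDr. Qed.

Lemma chrN (u : Z) : Xchr (- u) lam = (Xchr u lam)^-1.
Proof. by rewrite /Xchr -prodfV; apply: eq_bigr => p _; rewrite ffunE invr_expz. Qed.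

Lemma chr_neq0 (u : Z) : Xchr u lam != 0.
Proof. by apply/prodf_neq0 => p _; apply: expfz_neq0. Qed.

Lemma chr_mv (a : XMon l d) : Xchr (mv a) lam = \prod_p lam p ^+ Xexpo a p.
Proof. by apply: eq_bigr => p _; rewrite ffunE. Qed.

Lemma chr_eps (i : 'I_l) : Xchr (Xeps d i) lam = \prod_(j < d) lam (i, j).
Proof.
rewrite /Xchr prod_pair (bigD1 i) //= [X in _ * X]big1 ?mulr1.
  by apply: eq_bigr => j _; rewrite ffunE /= eqxx expr1z.
by move=> r ne; apply: big1 => j _; rewrite ffunE /= (negbTE ne) expr0z.
Qed.

Lemma chr_wt (i1 : 'I_l) (a : XMon l d) :
  Xchr (wt i1 a) lam = (\prod_p lam p ^+ Xexpo a p) / \prod_(j < d) lam (i1, j).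
Proof. by rewrite /wt chrD chrN chr_mv chr_eps. Qed.

Lemma chr_L (i0 : 'I_l) (j0 : 'I_d) (v : Z) : Xin_Ttilde lam -> inL v -> Xchr v lam = 1.
Proof.
move=> [_ eqP0] /andP[rc /eqP dg].
have dpos : (0 < d)%N := leq_ltn_trans (leq0n _) (ltn_ord j0).
have st : \sum_(r < l) v (r, j0) = 0.
  move: dg; rewrite (deg_rowc j0 rc) => /eqP; rewrite mulrn_eq0 => /orP[/eqP d0|/eqP //].
  by exfalso; move: dpos; rewrite d0.
pose P := \prod_(j < d) lam (i0, j).
have P0 : P != 0 by apply/prodf_neq0 => j _.
rewrite /Xchr prod_pair.
transitivity (\prod_(r < l) P ^ v (r, j0)).
  apply: eq_bigr => r _; rewrite /P -(eqP0 r i0).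
  rewrite (big_morph (fun x => x ^ v (r, j0)) (fun x y => expfzMl x y _) (exp1rz _ _)).
  apply: eq_bigr => j _; congr (_ ^ _); by move/rowcP: rc; apply.
rewrite -(big_morph (fun n => P ^ n) (fun x y => expfzDr x y P0) (expr0z P)).
by rewrite st expr0z.
Qed.
End Lam.

Lemma two_pow (n : int) : n != 0 -> (2 : C) ^ n != 1.
Proof.
case: n => k nz.
  change ((2:C) ^+ k != 1); rewrite -natrX -[1]/(1%:R) eqr_nat -[1%N](expn0 2) eqn_exp2l //.
rewrite NegzE -invr_expz invr_eq1; change ((2:C) ^+ k.+1 != 1); rewrite -natrX -[1]/(1%:R) eqr_nat -[1%N](expn0 2).
by rewrite eqn_exp2l.
Qed.

Lemma sum_deltaI (p : I) (x : I -> int) : \sum_(r : I) (r == p)%:Z * x r = x p.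
Proof.
by rewrite (bigD1 p) //= eqxx mul1r big1 ?addr0 // => r /negbTE ->; rewrite mul0r.
Qed.

Lemma rowsum_e (i : 'I_l) (p : I) : \sum_(j < d) ((i, j) == p)%:Z = (i == p.1)%:Z.
Proof.
case: p => a b /=; case: (eqVneq i a) => [->|ne].
  rewrite (bigD1 b) //= eqxx big1 ?addr0 // => j nj.
  by rewrite xpair_eqE eqxx (negbTE nj).
by rewrite big1 // => j _; rewrite xpair_eqE (negbTE ne).
Qed.

Lemma sep (v : Z) : ~~ inL v -> exists lam : I -> C, Xin_Ttilde lam /\ Xchr v lam != 1.
Proof.
have gen (w : I -> int) : (forall i k, \sum_(j < d) w (i, j) = \sum_(j < d) w (k, j)) ->
    \sum_p w p * v p != 0 -> exists lam : I -> C, Xin_Ttilde lam /\ Xchr v lam != 1.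
  have two0 : (2:C) != 0 by rewrite pnatr_eq0.
  move=> hw hs; exists (fun p => 2 ^ w p); split; first split.
  - by move=> p; apply: expfz_neq0; rewrite pnatr_eq0.
  - move=> i k.
    rewrite -!(big_morph (fun n => (2:C) ^ n) (fun x y => expfzDr x y two0) (expr0z 2)).
    by rewrite (hw i k).
  rewrite /Xchr (eq_bigr (fun p => 2 ^ (w p * v p))); last by move=> p _; rewrite exprz_exp.
  rewrite -(big_morph (fun n => (2:C) ^ n) (fun x y => expfzDr x y two0) (expr0z 2)).
  exact: two_pow.
case/nandP => [/forallPn[p /forallPn[q]]|ndg].
  rewrite negb_imply => /andP[/eqP e ne].
  apply: (gen (fun r => (r == p)%:Z - (r == q)%:Z)).
    move=> i k; rewrite !sumrB !rowsum_e e.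
    by case: (i == q.1); case: (k == q.1).
  rewrite (eq_bigr (fun r => (r == p)%:Z * v r - (r == q)%:Z * v r)); last by move=> r _; rewrite mulrBl.
  by rewrite sumrB !sum_deltaI subr_eq0.
apply: (gen (fun=> 1)) => //.
by rewrite (eq_bigr v) // => p _; rewrite mul1r.
Qed.

End Chr.

Section Weight.
Variables (l d : nat) (C : numFieldType) (i1 : 'I_l) (j0 : 'I_d).
Local Notation Z := (XZLD l d).
Local Notation XMon := (XMon l d).

Definition Ppred (u : Z) : pred XMon := [pred a | Xis_rel_mon a || inL (wt i1 a - u)].

Lemma scaleoE (k x : C) : k *: (x : C^o) = k * x.
Proof. by []. Qed.

Lemma WE : XWsp l d C = MS C [pred a | Xis_rel_mon a].
Proof. by []. Qed.

Lemma weightP (u : Z) (f : XPoly l d C) : f \in MS C (Ppred u) <-> Xin_weight i1 u f.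
Proof.
split.
  move/MSP => H lam [nz eqr]; rewrite WE; apply/MSP => b /= nrb.
  rewrite !ffunE scaleoE.
  case: (boolP (inL (wt i1 b - u))) => hL.
    rewrite -mulrA -chr_wt // -[wt i1 b](subrK u) chrD // (chr_L nz i1 j0) //.
    by rewrite mul1r mulrC subrr.
  by rewrite H ?mul0r ?mulr0 ?subrr //= negb_or nrb.
move=> Hw; apply/MSP => b /norP [nrb nL].
case: (sep C nL) => lam [Tl ne].
have nz := Tl.1.
have := Hw lam Tl; rewrite WE => /MSP /(_ b nrb); rewrite !ffunE scaleoE.
rewrite -mulrA -chr_wt // -[wt i1 b](subrK u) chrD //.
move/eqP; rewrite mulrA [Xchr u lam * f b]mulrC -mulrBl mulf_eq0 (negbTE (chr_neq0 nz u)) orbF.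
rewrite -{2}(mulr1 (f b)) -mulrBr mulf_eq0 subr_eq0 (negbTE ne) orbF => /eqP //.
Qed.

End Weight.

Theorem mainTheorem18 (R : realType) (l d : nat) (hl : (2 <= l)%N) (hd : (2 <= d)%N) :
  let C := R[i] in
  let i1 := Xrow1 hl in
  let W := XWsp l d C in
  exists P : XZLD l d -> {vspace XPoly l d C},
    (forall u f, f \in P u <-> Xin_weight i1 u f) /\
    (forall u, XPhi R i1 u -> (\dim (P u) = \dim W + 1)%N) /\
    exists s : seq (XZLD l d),
      (forall u, u \in s -> XPhi R i1 u) /\
      (forall u, XPhi R i1 u -> exists2 v, v \in s & XMeq u v) /\
      (forall (n m : nat), (n < size s)%N -> (m < size s)%N ->
          XMeq (nth 0 s n) (nth 0 s m) -> n = m) /\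
      (W + \sum_(u <- s) P u = fullv)%VS /\
      (\dim (fullv : {vspace XPoly l d C}) - \dim W
         = \sum_(u <- s) (\dim (P u) - \dim W))%N.
Proof.
move=> C i1 W.
pose j0 : 'I_d := Ordinal (ltnW hd).
have [aE _] : exists a : XMon l d, mv a = Xeps d i1.
  by apply: mkMon; [move=> p; rewrite ffunE | exact: deg_eps].
exists (fun u => MS C (Ppred i1 u)).
have dimW : \dim W = #|[pred a : XMon l d | Xis_rel_mon a]| by rewrite /W WE (dimMS C aE).
have uniqw (a b : XMon l d) : ~~ Xis_rel_mon a -> inL (wt i1 a - wt i1 b) -> a = b.
  move=> nra h; apply: Xmon_inj => p.
  have b0 q : 0 <= mv b q by rewrite ffunE.
  have h' : inL (mv a - mv b).
    by move: h; rewrite /wt (_ : mv a - Xeps d i1 - (mv b - Xeps d i1) = mv a - mv b) //; apply/ffunP => q; rewrite !ffunE; ring.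
  by have := key_rel j0 b0 h' nra p; rewrite ffunE => -[].
have dimP (u : XZLD l d) : XPhi R i1 u -> \dim (MS C (Ppred i1 u)) = (\dim W + 1)%N.
  move=> Hu; case: (Phi_good j0 Hu) => a0 [nr0 hL0].
  have E : Ppred i1 u =i [predU1 a0 & [pred a : XMon l d | Xis_rel_mon a]].
    move=> a; rewrite !inE /=; case: (boolP (Xis_rel_mon a)) => ra /=; first by rewrite orbT.
    rewrite orbF; apply/idP/eqP => [hL|->//].
    by apply: uniqw ra _; apply: inL_trans hL (inL_sym hL0).
  by rewrite (dimMS C aE) (eq_card E) cardU1 dimW inE (negbTE nr0) addnC.
split; first by move=> u f; apply: weightP.
split; first exact: dimP.
pose NR := [pred a : XMon l d | ~~ Xis_rel_mon a].
have phis (u : XZLD l d) : u \in [seq wt i1 a | a <- enum NR] -> XPhi R i1 u.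
  by case/mapP => a; rewrite mem_enum => nr ->; apply: wt_Phi.
exists [seq wt i1 a | a <- enum NR].
split; first exact: phis.
split.
  move=> u Hu; case: (Phi_good j0 Hu) => a0 [nr0 hL0]; exists (wt i1 a0).
    by apply: map_f; rewrite mem_enum.
  by apply: (inL_XMeq i1 j0); apply: inL_sym.
split.
  move=> n m; rewrite size_map => hn hm; rewrite !(nth_map aE) // => /XMeq_inL H.
  have nrx : ~~ Xis_rel_mon (nth aE (enum NR) n).
    by have := mem_nth aE hn; rewrite mem_enum.
  have := uniqw _ _ nrx H => /eqP; rewrite nth_uniq ?enum_uniq // => /eqP //.
split.
  apply/eqP; rewrite eqEsubv subvf /=; apply/subvP => f _.
  rewrite (decomp f); apply: memv_suml => b _; apply: memvZ.
  case: (boolP (Xis_rel_mon b)) => rb.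
    apply: (subvP (addvSl _ _)); rewrite /W WE; apply: memv_span; apply: map_f.
    by rewrite mem_enum.
  apply: (subvP (addvSr _ _)).
  have bs : wt i1 b \in [seq wt i1 a | a <- enum NR] by apply: map_f; rewrite mem_enum.
  rewrite (big_rem _ bs) /=; apply: (subvP (addvSl _ _)).
  apply/MSP => c; rewrite /Ppred inE => /norP[_ nL]; rewrite XmonvE.
  case: eqP => [e|//]; move: nL; rewrite e subrr; by rewrite inL0.
rewrite -(MS_full l d C) (dimMS C aE) dimW.
rewrite big_seq (eq_bigr (fun=> 1%N)); last first.
  by move=> u us; rewrite dimP ?dimW ?addKn //; apply: phis.
rewrite -big_seq sum1_size size_map -cardE.
have := cardC [pred a : XMon l d | Xis_rel_mon a] => <-.
by rewrite addKn.
Qed.
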